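(* Let $q$ be a prime power and $1\le t_i\le t_o<s$. If there exists a linear $(t_i,t_o,s,q)$-AONT, then there exists a linear $(t_i,t_o,s-1,q)$-AONT.
   Context: A linear $(t_i,t_o,s,q)$-AONT is given by an invertible $s\times s$ matrix $M$ over $\mathbb{F}_q$ defining the map $\mathbf{x}\mapsto\mathbf{y}=\mathbf{x}M^{-1}$ on row vectors of $\mathbb{F}_q^s$, such that for every set $I$ of $t_i$ input coordinates and every set $J$ of $s-t_o$ output coordinates, the pair $((x_i)_{i\in I},(y_j)_{j\in J})$ takes every value in $\mathbb{F}_q^{t_i+s-t_o}$ equally often (exactly $q^{t_o-t_i}$ times) as $\mathbf{x}$ ranges over $\mathbb{F}_q^s$. Equivalently, $M$ is invertible and every $t_o\times t_i$ submatrix of $M$ has rank $t_i$. *)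

(* Defs.v *)
From HB Require Import structures.
From mathcomp Require Import all_boot all_order all_algebra.
Set Implicit Arguments. Unset Strict Implicit. Unset Printing Implicit Defensive.
Import GRing.Theory.
Local Open Scope ring_scope.

(* Submatrices are given by injective
   row/column selections; the order of the selection does not affect rank. *)
Definition linear_AONT (F : fieldType) (ti to s : nat) (M : 'M[F]_s) : Prop :=
  M \in unitmx /\
  forall (f : 'I_to -> 'I_s) (g : 'I_ti -> 'I_s),
    injective f -> injective g -> \rank (mxsub f g M) = ti.

(* Main.v *)
Require Import Defs.
From mathcomp Require Import all_boot all_order all_algebra.
Import GRing.Theory.
Local Open Scope ring_scope.

Theorem mainTheorem7 (F : finFieldType) (ti to s : nat) :
  (1 <= ti)%N -> (ti <= to)%N -> (to < s)%N ->
  (exists M : 'M[F]_s, linear_AONT ti to M) ->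
  exists M : 'M[F]_(s.-1), linear_AONT ti to M.
Proof.
case: s => [//|n] _ _ _ [M [uM hM]] /=.
have : exists j, \det (row' 0 (col' j M)) != 0.
  apply/existsP; apply: contraT; rewrite negb_exists => /forallP H.
  move: uM; rewrite unitmxE unitfE (expand_det_row _ 0) big1 ?eqxx //.
  move=> j _; rewrite /cofactor; move/negPn: (H j) => /eqP ->.
  by rewrite !mulr0.
case=> j dj; exists (row' 0 (col' j M)); split.
  by rewrite unitmxE unitfE.
move=> f g injf injg.
have -> : mxsub f g (row' 0 (col' j M)) = mxsub (lift 0 \o f) (lift j \o g) M.
  by apply/matrixP => a b; rewrite !mxE.
apply: hM; apply: inj_comp => //; exact: lift_inj.
Qed.
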